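(* Let $t,k\ge2$ be integers with $(t+1)\mid(k+1)$. Then $N(tk+i,k)=N(tk-i,k)=t-i$ for every integer $0\le i\le t$.
   Context: For $n>k\ge1$, $N(n,k)$ is the nullity of the $n\times n$ skew-symmetric Toeplitz matrix $A(n,k)$ whose first $k$ superdiagonals have all entries $1$ and whose remaining superdiagonals have all entries $0$. This nullity depends only on $n\bmod (k^2+k)$, and $N(n,k)$ is defined for every integer $n$ as $N(n',k)$ for any $n'>k$ with $n'\equiv n\pmod{k^2+k}$. *)

(* Defs.v *)
From mathcomp Require Import all_boot all_order all_algebra.
Set Implicit Arguments. Unset Strict Implicit. Unset Printing Implicit Defensive.
Import Order.TTheory GRing.Theory Num.Theory.
Local Open Scope ring_scope.

Definition Amx (k n : nat) : 'M[rat]_n :=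
  \matrix_(i < n, j < n)
    (if ((i < j)%N && (j <= i + k)%N) then 1
     else if ((j < i)%N && (i <= j + k)%N) then -1 else 0).

Definition nullityA (n k : nat) : nat := (n - \rank (Amx k n))%N.

(* N(n,k) for every integer n: for n > k it is the nullity of A(n,k); otherwise
   it is the nullity of A(n',k) for the representative
   n' = k+1 + ((n - (k+1)) mod (k^2+k)) > k with n' = n mod (k^2+k). *)
Definition N (n : int) (k : nat) : nat :=
  if (k%:Z < n) then nullityA `|n|%N k
  else nullityA (k.+1 + `|((n - k.+1%:Z) %% (k * k + k)%N%:Z)%Z|%N)%N k.

(* Main.v *)
Require Import Defs.
From mathcomp Require Import all_boot all_order all_algebra.
Import Order.TTheory GRing.Theory Num.Theory.
From mathcomp Require Import zify ring.

Local Open Scope ring_scope.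
Set Implicit Arguments. Unset Strict Implicit. Unset Printing Implicit Defensive.

Definition Sp (k : nat) : {poly rat} := \sum_(i < k) 'X^i.
Definition Qp (k : nat) : {poly rat} := ('X^(k.+1) - 1) * Sp k.

Lemma coefS k m : (Sp k)`_m = ((m < k)%N)%:R.
Proof.
rewrite /Sp coef_sum.
under eq_bigr do rewrite coefXn.
case: (ltnP m k) => hm.
  rewrite (bigD1 (Ordinal hm)) //= eqxx big1 ?addr0 // => j hj.
  case: eqP => // e; case/eqP: hj; apply/val_inj => /=; done.
rewrite big1 // => j _; case: eqP => // e; move: (ltn_ord j); lia.
Qed.

Lemma coefQ k m : (Qp k)`_m =
  if ((k < m) && (m <= k + k))%N then 1 else if (m < k)%N then -1 else 0.
Proof.
rewrite /Qp mulrBl mul1r coefB coefXnM !coefS.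
case: (ltnP m k.+1) => h1; case: (ltnP m k) => h2; case: (ltnP (m - k.+1) k) => h3;
 case: (ltnP k m) => h4; case: (leqP m (k+k)) => h5 /=; try lia;
 by rewrite ?subr0 ?sub0r ?subrr.
Qed.

Definition pv n (u : 'rV[rat]_n) : {poly rat} := \sum_(j < n) u 0 j *: 'X^j.

Lemma size_pv n (u : 'rV[rat]_n) : (size (pv u) <= n)%N.
Proof.
apply/leq_sizeP => m hm; rewrite /pv coef_sum big1 // => i _.
rewrite coefZ coefXn; case: eqP => [e|]; last by rewrite mulr0.
move: (ltn_ord i); lia.
Qed.

Lemma keyA k n (u : 'rV[rat]_n) (r : 'I_n) :
  (u *m Amx k n) 0 r = (pv u * Qp k)`_(r + k).
Proof.
rewrite mxE /pv mulr_suml coef_sum.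
apply: eq_bigr => l _.
rewrite -scalerAl coefZ coefXnM coefQ mxE.
congr (_ * _).
case: (ltnP (r + k) l) => h1; case: (ltnP l r) => h2; case: (leqP r (l + k)) => h3;
 case: (ltnP r l) => h4; case: (leqP l (r + k)) => h5;
 case: (ltnP k (r + k - l)) => h6; case: (leqP (r + k - l) (k + k)) => h7;
 case: (ltnP (r + k - l) k) => h8 /=; try lia; done.
Qed.

Lemma coef_pv n (u : 'rV[rat]_n) m :
  (pv u)`_m = if (m < n)%N then \sum_(j < n | (j : nat) == m) u 0 j else 0.
Proof.
rewrite /pv coef_sum; case: ltnP => hm.
  rewrite [RHS]big_mkcond /=; apply: eq_bigr => i _.
  by rewrite coefZ coefXn eq_sym; case: eqP; rewrite ?mulr1 ?mulr0.
rewrite big1 // => i _; rewrite coefZ coefXn; case: eqP => [e|]; last by rewrite mulr0.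
move: (ltn_ord i); lia.
Qed.

Lemma coef_pv_ord n (u : 'rV[rat]_n) (j : 'I_n) : (pv u)`_j = u 0 j.
Proof.
rewrite coef_pv ltn_ord (big_pred1 j) // => i /=; apply/eqP/eqP => [e|->//].
Qed.

Lemma pv_eq0 n (u : 'rV[rat]_n) : pv u = 0 -> u = 0.
Proof.
move=> h; apply/rowP => j; rewrite -coef_pv_ord h coef0 mxE; done.
Qed.

Lemma pv_row n (x : {poly rat}) : (size x <= n)%N -> pv (\row_(j < n) x`_j) = x.
Proof.
move=> hs; apply/polyP => m; rewrite coef_pv; case: ltnP => hm.
  rewrite (big_pred1 (Ordinal hm)) ?mxE // => i /=; apply/eqP/eqP => [e|->//].
by rewrite nth_default //; apply: leq_trans hm.
Qed.

Lemma size_Qp k : (size (Qp k) <= (k + k).+1)%N.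
Proof.
apply/leq_sizeP => m hm; rewrite coefQ.
case: ifP => h; first lia.
case: ifP => h'; first lia. done.
Qed.

Lemma ker_decomp k n (u : 'rV[rat]_n) : u *m Amx k n = 0 ->
  exists a b : {poly rat}, (size a <= k)%N /\ (size b <= k)%N /\
     pv u * Qp k = a + 'X^((n + k)%N) * b.
Proof.
move=> hu.
set P := pv u * Qp k.
have hP : (size P <= n + k + k)%N.
  apply: leq_trans (size_mul_leq _ _) _.
  have := size_pv u; have := size_Qp k; lia.
exists (\poly_(i < k) P`_i), (\poly_(i < k) P`_(n + k + i)).
split; first exact: size_poly.
split; first exact: size_poly.
apply/polyP => m; rewrite coefD coefXnM !coef_poly.
case: (ltnP m k) => h1.
  have -> : (m < n + k)%N = true by lia.
  by rewrite addr0.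
case: (ltnP m (n + k)) => h2.
  rewrite add0r.
  have hr : (m - k < n)%N by lia.
  have := congr1 (fun M : 'M_(1, n) => M 0 (Ordinal hr)) hu.
  rewrite keyA mxE /= subnK //.
rewrite add0r; case: (ltnP (m - (n + k)) k) => h3.
  by rewrite subnKC.
by rewrite nth_default //; apply: leq_trans hP _; lia.
Qed.

Lemma ker_of_poly k n (x a b : {poly rat}) :
  (size x <= n)%N -> (size a <= k)%N -> (size b <= k)%N ->
  x * Qp k = a + 'X^((n + k)%N) * b -> (\row_(j < n) x`_j) *m Amx k n = 0.
Proof.
move=> hx ha hb E; apply/rowP => r.
rewrite keyA pv_row // E coefD coefXnM mxE.
have -> : (r + k < n + k)%N = true by move: (ltn_ord r); lia.
by rewrite addr0 nth_default //; apply: leq_trans ha _; apply: leq_addl.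
Qed.

Lemma XS1 m : ('X - 1) * Sp m = 'X^m - 1.
Proof.
elim: m => [|m IH]; first by rewrite /Sp big_ord0 mulr0 expr0 subrr.
rewrite /Sp big_ord_recr /= mulrDr -/(Sp m) IH mulrBl -exprS mul1r.
by rewrite addrC addrA subrK.
Qed.

Lemma XS k : 'X * Sp k + 1 = Sp k.+1.
Proof.
rewrite /Sp big_ord_recl /= expr0 addrC mulr_sumr; congr (_ + _).
by apply: eq_bigr => i _; rewrite exprS.
Qed.

Lemma dvd_Xn_sub1 m d : ('X^m - 1 : {poly rat}) %| ('X^((m * d)%N) - 1).
Proof.
rewrite exprM -(expr1n _ d) subrXX expr1n.
exact: dvdp_mulIl.
Qed.

Lemma X1_neq0 : ('X - 1 : {poly rat}) != 0.
Proof. by rewrite -polyC1 polyXsubC_eq0. Qed.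

Lemma Sp_dvd (t k : nat) : (t.+1 %| k.+1)%N -> Sp t.+1 %| Sp k.+1.
Proof.
case/dvdnP => d hd.
rewrite -(dvdp_mul2l _ _ X1_neq0) !XS1 hd mulnC.
exact: dvd_Xn_sub1.
Qed.

Lemma hornerS1 k : (Sp k).[1] = k%:R.
Proof.
rewrite /Sp horner_sum.
under eq_bigr do rewrite hornerXn expr1n.
by rewrite sumr_const card_ord.
Qed.

Lemma copSX1 k : (0 < k)%N -> coprimep (Sp k) ('X - 1).
Proof.
move=> hk; rewrite -polyC1 coprimep_XsubC /root hornerS1 pnatr_eq0; lia.
Qed.

Lemma copS (t k : nat) : (t.+1 %| k.+1)%N -> (0 < k)%N ->
  coprimep (Sp k) ('X^(t.+1) - 1).
Proof.
move=> hd hk; rewrite -XS1 coprimepMr copSX1 //=.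
apply/coprimepP => d h1 h2.
have h3 : d %| Sp k.+1 := dvdp_trans h2 (Sp_dvd hd).
rewrite -XS dvdp_addr in h3; last exact: dvdp_mull.
exact: dvdp_eqp1 h3 (eqpxx _).
Qed.

Lemma Qp_neq0 k : (0 < k)%N -> Qp k != 0.
Proof.
move=> hk; apply/eqP => h; have := coefQ k (k + k); rewrite h coef0.
have -> : ((k < k + k) && (k + k <= k + k))%N = true by lia.
move/eqP; by rewrite eq_sym oner_eq0.
Qed.

Lemma size_D n : (0 < n)%N -> size ('X^n - 1 : {poly rat}) = n.+1.
Proof. by move=> hn; rewrite -polyC1 size_XnsubC. Qed.

Lemma size_Sp k : (0 < k)%N -> size (Sp k) = k.
Proof.
move=> hk; have := congr1 (fun p : {poly rat} => size p) (XS1 k); rewrite size_D // size_mul ?X1_neq0 //.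
  rewrite -polyC1 size_XsubC /= => h; apply: succn_inj; rewrite -h; done.
apply/eqP => h; have := hornerS1 k; rewrite h horner0 => /eqP; rewrite eq_sym pnatr_eq0; lia.
Qed.

Lemma size_Xa (a : {poly rat}) : (size ('X * a)%R <= (size a).+1)%N.
Proof.
apply: leq_trans (size_mul_leq _ _) _; rewrite size_polyX; lia.
Qed.

Lemma zero_of_small (d p : {poly rat}) : d %| p -> (size p < size d)%N -> p = 0.
Proof.
move=> hd hs; apply/eqP; apply: contraT => hnz.
by rewrite ltnNge (dvdp_leq hnz hd) in hs.
Qed.

Lemma Sp_dvdXk k m : Sp k %| 'X^((k * m)%N) - 1.
Proof.
apply: dvdp_trans (dvd_Xn_sub1 k m); rewrite -XS1; exact: dvdp_mulIr.
Qed.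

Lemma finish k n (u : 'rV[rat]_n) (a b : {poly rat}) : (0 < k)%N ->
  pv u * Qp k = a + 'X^((n + k)%N) * b -> a = 0 -> b = 0 -> u = 0.
Proof.
move=> hk E ha hb; rewrite ha hb mulr0 addr0 in E.
apply: pv_eq0; apply/eqP; move/eqP: E; rewrite mulf_eq0 (negbTE (Qp_neq0 hk)).
by rewrite orbF.
Qed.

Lemma U1 t k (hd : (t.+1 %| k.+1)%N) (hk : (0 < k)%N) (u : 'rV[rat]_((t * k.+1)%N)) :
  u *m Amx k ((t * k.+1)%N) = 0 -> u = 0.
Proof.
move=> /ker_decomp [a [b [ha [hb E]]]].
set p := pv u * Qp k in E.
have e1 : ((t * k.+1 + k).+1 = k.+1 * t.+1)%N by rewrite !mulSn !mulnS; lia.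
have hD1p : ('X^(k.+1) - 1) %| p by apply: dvdp_mull; exact: dvdp_mulIl.
have h1 : 'X * p = ('X * a + b) + ('X^((k.+1 * t.+1)%N) - 1) * b.
  by rewrite E -e1 exprS; ring.
have h2 : ('X^(k.+1) - 1) %| 'X * a + b.
  rewrite -(dvdp_addl _ (dvdp_mulr b (dvd_Xn_sub1 k.+1 t.+1))) -h1.
  exact: dvdp_mull.
have h3 : 'X * a + b = 0.
  apply: zero_of_small h2 _; rewrite size_D //.
  apply: leq_ltn_trans (size_add _ _) _; have := size_Xa a; lia.
have hb' : b = - ('X * a) by apply/eqP; rewrite -addr_eq0 addrC h3.
have hSp : Sp k %| p by apply: dvdp_mull; exact: dvdp_mulIr.
have e2 : (k.+1 * t.+1 = k * t.+1 + t.+1)%N by rewrite mulSn; lia.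
have h4 : a * ('X^(t.+1) - 1) = - p - (a * 'X^(t.+1)) * ('X^((k * t.+1)%N) - 1).
  have eX : 'X^(t.+1) * 'X^((k * t.+1)%N) = 'X * 'X^((t * k.+1 + k)%N) :> {poly rat}.
    by rewrite -exprS -exprD e1 e2 addnC.
  have -> : (a * 'X^(t.+1)) * ('X^((k * t.+1)%N) - 1) = a * ('X * 'X^((t * k.+1 + k)%N)) - a * 'X^(t.+1).
    by rewrite -eX; ring.
  rewrite E hb'; ring.
have h5 : Sp k %| a.
  rewrite -(Gauss_dvdpl _ (copS hd hk)) h4.
  apply: dvdp_sub; first by rewrite dvdpNr.
  apply: dvdp_mull; exact: Sp_dvdXk.
have ha0 : a = 0.
  apply: zero_of_small h5 _; rewrite size_Sp //.
  case: (eqVneq a 0) => [->|anz]; first by rewrite size_poly0.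
  have : size b = (size a).+1 by rewrite hb' size_opp mulrC size_mulX.
  lia.
apply: (finish hk E ha0); by rewrite hb' ha0 mulr0 oppr0.
Qed.

Lemma size_from_eq (R : idomainType) (phi : {poly R}) t k : (t <= k)%N ->
  'X^(k.+1) - 1 = phi * ('X^(t.+1) - 1) -> size phi = (k - t).+1.
Proof.
move=> ht hphi.
have sD : forall m, size ('X^(m.+1) - 1 : {poly R}) = m.+2.
  by move=> m; rewrite -polyC1 size_XnsubC.
have D2nz : ('X^(t.+1) - 1 : {poly R}) != 0 by rewrite -size_poly_eq0 sD.
have phinz : phi != 0.
  by apply/eqP => h; move: hphi; rewrite h mul0r => /eqP; rewrite -size_poly_eq0 sD.
have := congr1 (fun q : {poly R} => size q) hphi; rewrite /= size_mul // !sD.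
rewrite addnS /=; lia.
Qed.

Lemma ar1 x t k : (t <= k)%N -> (k.+2 <= x + t.+1)%N -> (k - t < x)%N.
Proof. lia. Qed.
Lemma ar2 a b t k p : b = (t + a)%N -> (b <= k)%N -> (k - t < p)%N -> (a < p)%N.
Proof. lia. Qed.

Lemma U2 t k n m1 m2 (hd : (t.+1 %| k.+1)%N) (hk : (0 < k)%N)
  (he1 : (n + k + t = k * m1)%N) (he2 : (n + k + t.+1 + t = k.+1 * m2)%N)
  (u : 'rV[rat]_n) :
  u *m Amx k n = 0 -> u = 0.
Proof.
move=> /ker_decomp [a [b [ha [hb E]]]].
set p := pv u * Qp k in E.
set e := (n + k)%N in E he1 he2.
have hD1p : ('X^(k.+1) - 1) %| p by apply: dvdp_mull; exact: dvdp_mulIl.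
have hSp : Sp k %| p by apply: dvdp_mull; exact: dvdp_mulIr.
set c := 'X^t * a + b.
have hc1 : Sp k %| c.
  have h : 'X^t * p = c + ('X^((k * m1)%N) - 1) * b.
    rewrite E -he1 addnC exprD /c; ring.
  rewrite -(dvdp_addl _ (dvdp_mulr b (Sp_dvdXk k m1))) -h.
  exact: dvdp_mull.
have hc2 : ('X^(k.+1) - 1) %| 'X^t * ('X^(t.+1) * a) + b.
  have h : 'X^t * ('X^(t.+1) * p) = 'X^t * ('X^(t.+1) * a) + b + ('X^((k.+1 * m2)%N) - 1) * b.
    rewrite E -he2 [(e + _)%N]addnC [(_ + e)%N]addnC !exprD; ring.
  rewrite -(dvdp_addl _ (dvdp_mulr b (dvd_Xn_sub1 k.+1 m2))) -h.
  by apply: dvdp_mull; apply: dvdp_mull.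
have [d hdd] := dvdnP hd.
have hD2 : ('X^(t.+1) - 1 : {poly rat}) %| ('X^(k.+1) - 1).
  by rewrite hdd mulnC; exact: dvd_Xn_sub1.
have hc3 : ('X^(t.+1) - 1) %| c.
  have h : c = ('X^t * ('X^(t.+1) * a) + b) - 'X^t * ('X^(t.+1) - 1) * a by rewrite /c; ring.
  rewrite h; apply: dvdp_sub; first exact: dvdp_trans hD2 hc2.
  by apply: dvdp_mulr; apply: dvdp_mull; exact: dvdpp.
have Spnz : Sp k != 0 by rewrite -size_poly_eq0 size_Sp //; lia.
have D2nz : ('X^(t.+1) - 1 : {poly rat}) != 0 by rewrite -size_poly_eq0 size_D.
have hc0 : c = 0.
  have h : Sp k * ('X^(t.+1) - 1) %| c by rewrite Gauss_dvdp ?copS // hc1 hc3.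
  apply: zero_of_small h _; rewrite size_mul // size_Sp // size_D //.
  apply: leq_ltn_trans (size_add _ _) _.
  have : (size ('X^t * a)%R <= t + size a)%N.
    by apply: leq_trans (size_mul_leq _ _) _; rewrite size_polyXn; lia.
  lia.
have hb' : b = - ('X^t * a) by apply/eqP; rewrite -addr_eq0 addrC; apply/eqP.
have [phi hphi] : exists phi : {poly rat}, 'X^(k.+1) - 1 = phi * ('X^(t.+1) - 1) by apply/dvdpP.
have phinz : phi != 0 by apply/eqP => h; move: hphi; rewrite h mul0r => /eqP; rewrite -size_poly_eq0 size_D.
have h6 : phi %| 'X^t * a.
  rewrite -(dvdp_mul2l _ _ D2nz) [X in _ %| X]mulrC [X in X %| _]mulrC -hphi.
  have -> : 'X^t * a * ('X^(t.+1) - 1) = 'X^t * ('X^(t.+1) * a) + b.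
    rewrite hb'; ring.
  exact: hc2.
have cop : coprimep phi ('X^t).
  apply: coprimep_expr; rewrite -[X in coprimep _ X]subr0 -polyC0 coprimep_XsubC.
  have := congr1 (fun q : {poly rat} => q.[0]) hphi.
  rewrite /= hornerM !hornerE /= expr0n /= => h; apply/negP => /eqP hr.
  move: h; rewrite hr mul0r sub0r => /eqP; by rewrite oppr_eq0 oner_eq0.
have h7 : phi %| a by rewrite -(Gauss_dvdpr _ cop).
have ht : (t <= k)%N by have := dvdn_leq (ltn0Sn k) hd; rewrite ltnS.
have sphi : (k - t < size phi)%N.
  have := size_mul_leq phi ('X^(t.+1) - 1); rewrite -hphi !size_D // addnS /=.
  exact: ar1 ht.
have ha0 : a = 0.
  apply: zero_of_small h7 _.
  case: (eqVneq a 0) => [->|anz]; first by rewrite size_poly0; exact: leq_ltn_trans (leq0n _) sphi.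
  have hh : size b = (t + size a)%N by rewrite hb' size_opp mulrC size_mulXn.
  exact: ar2 hh hb sphi.
apply: (finish hk E ha0); by rewrite hb' ha0 mulr0 oppr0.
Qed.

Unset Implicit Arguments.

Lemma monicD n : (0 < n)%N -> ('X^n - 1 : {poly rat}) \is monic.
Proof. by move=> hn; rewrite -polyC1 monicXnsubC. Qed.

Lemma size_phi (phi : {poly rat}) t k : (t <= k)%N ->
  'X^(k.+1) - 1 = phi * ('X^(t.+1) - 1) -> size phi = (k - t).+1.
Proof.
move=> ht hphi.
have phinz : phi != 0.
  by apply/eqP => h; move: hphi; rewrite h mul0r => /eqP; rewrite -size_poly_eq0 size_D.
have := size_Mmonic phinz (@monicD t.+1 (ltn0Sn t)).
rewrite -hphi !size_D // addnS /= => h; lia.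
Qed.

Lemma Spnz k : (0 < k)%N -> Sp k != 0.
Proof. by move=> hk; rewrite -size_poly_eq0 size_Sp //; lia. Qed.

Lemma monicSp k : (0 < k)%N -> Sp k \is monic.
Proof.
move=> hk; rewrite monicE lead_coefE size_Sp // coefS.
have -> : (k.-1 < k)%N by lia.
done.
Qed.

Lemma size_W (W : {poly rat}) t k : (0 < k)%N ->
  W * (Sp k * ('X^(t.+1) - 1)) = 'X^((k * t.+1)%N) - 1 ->
  W != 0 /\ (size W <= (t * k - t).+1)%N.
Proof.
move=> hk hW.
have hkt : (0 < k * t.+1)%N by rewrite muln_gt0 hk.
have Wnz : W != 0.
  apply/eqP => h; move: hW; rewrite h mul0r => /eqP; rewrite eq_sym -size_poly_eq0 size_D //.
split => //.
have hM : Sp k * ('X^(t.+1) - 1) \is monic by rewrite monicMl ?monicSp ?monicD.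
have h1 := size_Mmonic Wnz hM.
have h2 := size_Mmonic (@Spnz k hk) (@monicD t.+1 (ltn0Sn t)).
rewrite size_Sp // size_D // in h2.
rewrite hW size_D // h2 in h1.
move: h1; rewrite addnS /= mulnS; lia.
Qed.

Lemma L0 t k (hd : (t.+1 %| k.+1)%N) (hk : (0 < k)%N) :
  (t <= nullityA (t * k) k)%N.
Proof.
have htk : (t <= k)%N by have := dvdn_leq (ltn0Sn k) hd; rewrite ltnS.
have [d hdd] := dvdnP hd.
have hD2 : ('X^(t.+1) - 1 : {poly rat}) %| ('X^(k.+1) - 1).
  by rewrite hdd mulnC; exact: dvd_Xn_sub1.
have [phi hphi] : exists phi : {poly rat}, 'X^(k.+1) - 1 = phi * ('X^(t.+1) - 1) by apply/dvdpP.
have sphi := size_phi _ _ _ htk hphi.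
have hdiv : Sp k * ('X^(t.+1) - 1) %| 'X^((k * t.+1)%N) - 1.
  rewrite Gauss_dvdp ?copS // Sp_dvdXk /= mulnC; exact: dvd_Xn_sub1.
set W := ('X^((k * t.+1)%N) - 1) %/ (Sp k * ('X^(t.+1) - 1)).
have hW : W * (Sp k * ('X^(t.+1) - 1)) = 'X^((k * t.+1)%N) - 1 := divpK hdiv.
have [Wnz sW] := size_W _ _ _ hk hW.
set n := (t * k)%N.
set K : 'M[rat]_(t, n) := \matrix_(j < t, l < n) ('X^j * W)`_l.
have hrow : forall j : 'I_t, row j K = \row_(l < n) ('X^j * W)`_l.
  by move=> j; apply/rowP => l; rewrite !mxE.
have hKA : K *m Amx k n = 0.
  apply/row_matrixP => j; rewrite row_mul row0 hrow.
  have hj := ltn_ord j.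
  apply: (@ker_of_poly k n _ (- ('X^j * phi)) ('X^j * phi)).
  - apply: leq_trans (size_mul_leq _ _) _; rewrite size_polyXn /n.
    have := leq_pmulr t hk; move: sW hj; clear; rewrite addSn /=; lia.
  - rewrite size_opp; apply: leq_trans (size_mul_leq _ _) _; rewrite size_polyXn sphi.
    move: hj htk; clear; lia.
  - apply: leq_trans (size_mul_leq _ _) _; rewrite size_polyXn sphi.
    move: hj htk; clear; lia.
  - have e : (n + k = k * t.+1)%N by rewrite /n mulnS; lia.
    rewrite /Qp hphi e -[X in X * ('X^j * phi)](subrK 1) -hW; ring.
have hfree : forall v : 'rV[rat]_t, v *m K = 0 -> v = 0.
  move=> v hv; apply: pv_eq0.
  have hc : pv v * W = 0.
    apply/polyP => l; rewrite coef0.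
    case: (ltnP l n) => hl.
      have := congr1 (fun M : 'M_(1,n) => M 0 (Ordinal hl)) hv; rewrite !mxE /= => hz; apply: (etrans _ hz).
      rewrite /pv mulr_suml. rewrite coef_sum; apply: eq_bigr => j _; rewrite mxE -scalerAl coefZ.
      done.
    rewrite nth_default //; apply: leq_trans (size_mul_leq _ _) _.
    have := size_pv v; have := leq_pmulr t hk; move: sW hl; rewrite /n -subn1; clear; lia.
  by move/eqP: hc; rewrite mulf_eq0 (negbTE Wnz) orbF => /eqP.
have hrk : \rank K = t.
  apply/eqP; change (row_free K); rewrite -kermx_eq0; apply/eqP/row_matrixP => i; rewrite row0; apply: hfree.
  by rewrite -row_mul mulmx_ker row0.
rewrite /nullityA -mxrank_ker -{1}hrk; apply: mxrankS; apply/sub_kermxP; exact: hKA.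
Qed.

Set Implicit Arguments. Unset Strict Implicit.

Lemma rank_col (F : fieldType) m1 m2 n (A : 'M[F]_(m1, n)) (B : 'M[F]_(m2, n)) :
  (\rank (col_mx A B) <= \rank A + \rank B)%N.
Proof. by rewrite -addsmxE; exact: mxrank_adds_leqif. Qed.

Lemma rank_row (F : fieldType) m n1 n2 (A : 'M[F]_(m, n1)) (B : 'M[F]_(m, n2)) :
  (\rank (row_mx A B) <= \rank A + \rank B)%N.
Proof. by rewrite -mxrank_tr tr_row_mx -(mxrank_tr A) -(mxrank_tr B); exact: rank_col. Qed.

Lemma rank_dsub (F : fieldType) m1 m2 n (M : 'M[F]_(m1 + m2, n)) :
  (\rank (dsubmx M) <= \rank M)%N.
Proof.
apply: mxrankS; have := submx_refl M; rewrite -{1}(vsubmxK M) col_mx_sub.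
by case/andP.
Qed.

Lemma rank_rsub (F : fieldType) m n1 n2 (M : 'M[F]_(m, n1 + n2)) :
  (\rank (rsubmx M) <= \rank M)%N.
Proof. by rewrite -mxrank_tr trmx_rsub -(mxrank_tr M); exact: rank_dsub. Qed.

Lemma drsub_A k n : drsubmx (Amx k (1 + n)) = Amx k n.
Proof.
apply/matrixP => i j; rewrite !mxE /=.
case: (ltnP i j) => h1; case: (leqP j (i + k)) => h2; case: (ltnP j i) => h3; case: (leqP i (j + k)) => h4;
 case: (ltnP (1 + i) (1 + j)) => h5; case: (leqP (1 + j) (1 + i + k)) => h6;
 case: (ltnP (1 + j) (1 + i)) => h7; case: (leqP (1 + i) (1 + j + k)) => h8 /=; try lia; done.
Qed.

Lemma lip k n : (nullityA n k <= (nullityA (1 + n) k).+1)%N /\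
                (nullityA (1 + n) k <= (nullityA n k).+1)%N.
Proof.
rewrite /nullityA.
set M := Amx k (1 + n).
have h1 : (\rank (Amx k n) <= \rank M)%N.
  rewrite -drsub_A; apply: leq_trans (rank_rsub (dsubmx M)) _; exact: rank_dsub.
have h2 : (\rank M <= (\rank (Amx k n)).+2)%N.
  rewrite -{1}(vsubmxK M); apply: leq_trans (rank_col _ _) _.
  have e : dsubmx M = row_mx (dlsubmx M) (drsubmx M) := esym (hsubmxK _).
  rewrite e; have := rank_row (dlsubmx M) (drsubmx M).
  have := rank_leq_row (usubmx M); have := rank_leq_col (dlsubmx M).
  rewrite drsub_A => ha hb hc.
  by apply: leq_trans (leq_add hb (leq_trans hc (leq_add ha (leqnn _)))) _; rewrite !add1n.
have h3 := rank_leq_row (Amx k n).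
have h4 := rank_leq_row M.
lia.
Qed.

Unset Implicit Arguments.

Lemma null0 k n : (forall u : 'rV[rat]_n, u *m Amx k n = 0 -> u = 0) ->
  nullityA n k = 0%N.
Proof.
move=> H; rewrite /nullityA -mxrank_ker.
have -> : kermx (Amx k n) = 0.
  apply/row_matrixP => i; rewrite row0; apply: H.
  by rewrite -row_mul mulmx_ker row0.
exact: mxrank0.
Qed.

Lemma lipd k n d : (nullityA n k <= nullityA (n + d) k + d)%N /\
                   (nullityA (n + d) k <= nullityA n k + d)%N.
Proof.
elim: d => [|d [IH1 IH2]]; first by rewrite !addn0.
have [h1 h2] := lip k (n + d).
have e : (n + d.+1 = 1 + (n + d))%N by lia.
rewrite e.
split; lia.
Qed.

Local Close Scope ring_scope.

Theorem theorem8p7 (t k : nat) (ht : (2 <= t)%N) (hk : (2 <= k)%N)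
  (hdiv : (t.+1 %| k.+1)%N) (i : nat) (hi : (i <= t)%N) :
  N ((t * k + i)%N%:Z) k = (t - i)%N /\
  N ((t * k)%N%:Z - i%:Z)%R k = (t - i)%N.
Proof.
have hk0 : (0 < k)%N by lia.
have htk : (t <= k)%N by have := dvdn_leq (ltn0Sn k) hdiv; rewrite ltnS.
have htk2 : (t <= t * k)%N by apply: leq_pmulr; lia.
have hkt : (k < t * k)%N by have := leq_mul2r k 2 t; rewrite ht; lia.
set a := (t * k)%N.
have fa : (t <= nullityA a k)%N := L0 t k hdiv hk0.
have fat : nullityA (a + t) k = 0%N.
  have e : (a + t = t * k.+1)%N by rewrite /a mulnS addnC.
  rewrite e; apply: null0 => u; exact: (@U1 t k hdiv hk0 u).
have fam : nullityA (a - t) k = 0%N.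
  apply: null0 => u; apply: (@U2 t k _ t.+1 t.+1 hdiv hk0).
    move: htk2; rewrite /a; nia.
  move: htk2; rewrite /a; nia.
have P1 : nullityA (a + i) k = (t - i)%N.
  have [l1 _] := lipd k a i.
  have [l2 _] := lipd k (a + i) (t - i).
  have e : (a + i + (t - i) = a + t)%N by lia.
  rewrite e fat in l2; lia.
have P2 : nullityA (a - i) k = (t - i)%N.
  have [_ l1] := lipd k (a - i) i.
  have [_ l2] := lipd k (a - t) (t - i).
  have e1 : (a - i + i = a)%N by lia.
  have e2 : (a - t + (t - i) = a - i)%N by lia.
  rewrite e1 in l1; rewrite e2 fam in l2; lia.
split.
  rewrite /N ltz_nat ifT; last by lia.
  by rewrite absz_nat P1.
rewrite subzn; last by lia.
case: (ltnP k (a - i)) => hc.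
  by rewrite /N ltz_nat hc absz_nat P2.
move: hc; rewrite /a => hc.
have et : t = 2%N by move: hc hi ht hk htk; clear; nia.
subst t.
have ek : k = 2%N by move: hc hi hk htk; clear; nia.
have ei : i = 2%N by lia.
subst k i.
change (nullityA 8 2 = 0%N).
apply: null0 => u; apply: (@U2 2 2 8 6 5) => //.
Qed.
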